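(* Let $\{x^k\}$ be generated by the MPG algorithm described in the context, and let $k$ be an iteration at which the algorithm does not stop (so $x^{k+1}$, $d^k$, $t_k$ are defined). Suppose the index $j\in\{1,\ldots,m\}$ satisfies $$G_j(x^{k+1})\le G_j(x^k)+t_k\nabla G_j(x^k)^\top d^k+t_k\tfrac{\gamma}{2}\|d^k\|^2.$$ Then: (i) $\psi_{x^k}(p^k)\ge \frac{1}{t_k}\big(F_j(x^{k+1})-F_j(x^k)\big)-\frac{\gamma}{2}\|d^k\|^2$; (ii) for every $x\in\mathrm{dom}(F)$, $$\|x^{k+1}-x\|^2\le\|x^k-x\|^2+2\alpha\big(F_j(x^k)-F_j(x^{k+1})\big)+2\alpha t_k\max_{i=1,\ldots,m}\big(F_i(x)-F_i(x^k)\big)-2\alpha t_k\Big(\frac1\alpha-\frac\gamma2\Big)\|d^k\|^2+t_k^2\|d^k\|^2;$$ (iii) $F_j(x^{k+1})-F_j(x^k)\le -t_k\big(\frac1\alpha-\frac\gamma2\big)\|d^k\|^2$.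
   Context: Let $F:\mathbb{R}^n\to(\mathbb{R}\cup\{+\infty\})^m$, $F=(F_1,\ldots,F_m)$, with $F_j=G_j+H_j$ for $j=1,\ldots,m$, where: (i) each $G_j:\mathbb{R}^n\to\mathbb{R}$ is continuously differentiable and convex; (ii) each $H_j:\mathbb{R}^n\to\mathbb{R}\cup\{+\infty\}$ is proper, convex and continuous on its domain; (iii) $\mathrm{dom}(F):=\{x: F_j(x)<+\infty\ \forall j\}$ is nonempty and closed. For $u,v\in\mathbb{R}^m$, $u\preceq v$ means $u_j\le v_j$ for all $j$. For $x\in\mathrm{dom}(F)$ and $\alpha>0$ define $\psi_x(u):=\max_{j=1,\ldots,m}\big(\nabla G_j(x)^\top(u-x)+H_j(u)-H_j(x)\big)$, $p_\alpha(x):=\arg\min_{u\in\mathbb{R}^n}\psi_x(u)+\frac{1}{2\alpha}\|u-x\|^2$ (unique minimizer), and $\theta_\alpha(x):=\psi_x(p_\alpha(x))+\frac{1}{2\alpha}\|p_\alpha(x)-x\|^2$. MPG algorithm. Step 0: choose $x^0\in\mathrm{dom}(F)$, $\alpha>0$, $\gamma\in(0,2/\alpha)$, $0<\tau_1<\tau_2<1$; set $k=0$. Step 1: compute $p^k:=p_\alpha(x^k)$ and $\theta_\alpha(x^k)$. Step 2: if $\theta_\alpha(x^k)=0$, stop. Step 3: set $d^k:=p^k-x^k$, take $j_k^*\in\arg\max_{j}\nabla G_j(x^k)^\top d^k$, set $t=1$. Step 3.1: if $G_{j_k^*}(x^k+td^k)\le G_{j_k^*}(x^k)+t\nabla G_{j_k^*}(x^k)^\top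 d^k+t\frac{\gamma}{2}\|d^k\|^2$, go to Step 3.2; otherwise replace $t$ by some value in $[\tau_1 t,\tau_2 t]$ and repeat Step 3.1. Step 3.2: if $F(x^k+td^k)\preceq F(x^k)$, set $t_k=t$ and go to Step 4. Step 3.3: replace $t$ by some value in $[\tau_1 t,\tau_2 t]$; if $G_j(x^k+td^k)\le G_j(x^k)+t\nabla G_j(x^k)^\top d^k+t\frac{\gamma}{2}\|d^k\|^2$ for all $j=1,\ldots,m$, set $t_k=t$ and go to Step 4; otherwise repeat Step 3.3. Step 4: $x^{k+1}:=x^k+t_kd^k$, $k\leftarrow k+1$, go to Step 1. *)

(* Defs.v *)
From HB Require Import structures.
From mathcomp Require Import all_boot all_order all_algebra.
From mathcomp Require Import all_classical all_reals all_analysis.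
Set Implicit Arguments. Unset Strict Implicit. Unset Printing Implicit Defensive.
Import Order.TTheory GRing.Theory Num.Theory.
Import numFieldNormedType.Exports.
Local Open Scope classical_set_scope.
Local Open Scope ring_scope.

Definition dotv (R : realType) (n : nat) (u v : 'rV[R]_n) : R :=
  \sum_(i < n) u ord0 i * v ord0 i.
Definition sqnorm (R : realType) (n : nat) (v : 'rV[R]_n) : R := dotv v v.

Definition convex_fun (R : realType) (n : nat) (f : 'rV[R]_n -> R) : Prop :=
  forall (x y : 'rV[R]_n) (l : R), 0 < l < 1 ->
    f ((1 - l) *: x + l *: y) <= (1 - l) * f x + l * f y.

Definition convex_efun (R : realType) (n : nat) (f : 'rV[R]_n -> \bar R) : Prop :=
  forall (x y : 'rV[R]_n) (l : R), 0 < l < 1 ->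
    (f (((1 - l) *: x + l *: y)%R) <= (1 - l)%:E * f x + l%:E * f y)%E.

Definition proper_efun (R : realType) (n : nat) (f : 'rV[R]_n -> \bar R) : Prop :=
  (forall x, f x != -oo%E) /\ exists x, f x \is a fin_num.

Definition edom (R : realType) (n : nat) (f : 'rV[R]_n -> \bar R) : set 'rV[R]_n :=
  [set x | f x \is a fin_num].

Definition is_gradient (R : realType) (n : nat) (f : 'rV[R]_n -> R)
    (g : 'rV[R]_n -> 'rV[R]_n) : Prop :=
  forall x, differentiable f x /\ forall v, 'd f x v = dotv (g x) v.

Definition Fobj (R : realType) (n m : nat) (G : 'I_m -> 'rV[R]_n -> R)
    (H : 'I_m -> 'rV[R]_n -> \bar R) (j : 'I_m) (x : 'rV[R]_n) : \bar R :=
  ((G j x)%:E + H j x)%E.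

Definition domF (R : realType) (n m : nat) (G : 'I_m -> 'rV[R]_n -> R)
    (H : 'I_m -> 'rV[R]_n -> \bar R) : set 'rV[R]_n :=
  [set x | forall j, (Fobj G H j x < +oo)%E].

Definition standing_assumptions (R : realType) (n m : nat)
    (G : 'I_m -> 'rV[R]_n -> R) (gradG : 'I_m -> 'rV[R]_n -> 'rV[R]_n)
    (H : 'I_m -> 'rV[R]_n -> \bar R) : Prop :=
  (forall j, is_gradient (G j) (gradG j) /\ continuous (gradG j)
             /\ convex_fun (G j)) /\
  (forall j, proper_efun (H j) /\ convex_efun (H j) /\
             {within edom (H j), continuous (fun x => fine (H j x))}) /\
  (domF G H !=set0 /\ closed (domF G H)).

Definition psi (R : realType) (n m : nat)
    (gradG : 'I_m -> 'rV[R]_n -> 'rV[R]_n) (H : 'I_m -> 'rV[R]_n -> \bar R)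
    (x u : 'rV[R]_n) : \bar R :=
  (\big[maxe/-oo]_(j < m) ((dotv (gradG j x) (u - x)%R)%:E + H j u - H j x))%E.

Definition prox_obj (R : realType) (n m : nat)
    (gradG : 'I_m -> 'rV[R]_n -> 'rV[R]_n) (H : 'I_m -> 'rV[R]_n -> \bar R)
    (alpha : R) (x u : 'rV[R]_n) : \bar R :=
  (psi gradG H x u + (sqnorm (u - x)%R / (2 * alpha))%:E)%E.

Definition is_prox (R : realType) (n m : nat)
    (gradG : 'I_m -> 'rV[R]_n -> 'rV[R]_n) (H : 'I_m -> 'rV[R]_n -> \bar R)
    (alpha : R) (x p : 'rV[R]_n) : Prop :=
  forall u, (prox_obj gradG H alpha x p <= prox_obj gradG H alpha x u)%E.

(* theta_alpha(x) given p = p_alpha(x) *)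
Definition theta (R : realType) (n m : nat)
    (gradG : 'I_m -> 'rV[R]_n -> 'rV[R]_n) (H : 'I_m -> 'rV[R]_n -> \bar R)
    (alpha : R) (x p : 'rV[R]_n) : \bar R :=
  prox_obj gradG H alpha x p.

Definition armijo (R : realType) (n m : nat) (G : 'I_m -> 'rV[R]_n -> R)
    (gradG : 'I_m -> 'rV[R]_n -> 'rV[R]_n) (gamma : R) (x d : 'rV[R]_n)
    (j : 'I_m) (t : R) : Prop :=
  G j (x + t *: d) <= G j x + t * dotv (gradG j x) d + t * (gamma / 2) * sqnorm d.

Definition Fle (R : realType) (n m : nat) (G : 'I_m -> 'rV[R]_n -> R)
    (H : 'I_m -> 'rV[R]_n -> \bar R) (y x : 'rV[R]_n) : Prop :=
  forall j, (Fobj G H j y <= Fobj G H j x)%E.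

Definition reduce (R : realType) (tau1 tau2 t t' : R) : Prop :=
  tau1 * t <= t' <= tau2 * t.

(* Backtracking loop: starting from t, while the test P fails replace t by
   some value in [tau1 t, tau2 t]; bt_until P t s means the loop can exit
   with value s. *)
Inductive bt_until (R : realType) (tau1 tau2 : R) (P : R -> Prop) : R -> R -> Prop :=
| bt_stop t : P t -> bt_until tau1 tau2 P t t
| bt_next t t' s : ~ P t -> reduce tau1 tau2 t t' ->
    bt_until tau1 tau2 P t' s -> bt_until tau1 tau2 P t s.

Definition linesearch (R : realType) (n m : nat) (G : 'I_m -> 'rV[R]_n -> R)
    (gradG : 'I_m -> 'rV[R]_n -> 'rV[R]_n) (H : 'I_m -> 'rV[R]_n -> \bar R)
    (gamma tau1 tau2 : R) (x d : 'rV[R]_n) (jstar : 'I_m) (tk : R) : Prop :=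
  exists t2 : R,
    bt_until tau1 tau2 (armijo G gradG gamma x d jstar) 1 t2 /\
    ((Fle G H (x + t2 *: d) x /\ tk = t2) \/
     (~ Fle G H (x + t2 *: d) x /\
      exists t3, reduce tau1 tau2 t2 t3 /\
        bt_until tau1 tau2 (fun t => forall j, armijo G gradG gamma x d j t) t3 tk)).

(* (x, p, t) is a run of the MPG algorithm: x 0 in dom F; as long as the
   algorithm has not stopped before iteration k, p k = p_alpha(x k), and if
   moreover theta_alpha(x k) <> 0, then d^k = p k - x k, some j* maximizing
   <grad G_j(x k), d^k> is taken, t k is an output of the line search and
   x (k+1) = x k + t k d^k. *)
Definition MPG_run (R : realType) (n m : nat) (G : 'I_m -> 'rV[R]_n -> R)
    (gradG : 'I_m -> 'rV[R]_n -> 'rV[R]_n) (H : 'I_m -> 'rV[R]_n -> \bar R)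
    (alpha gamma tau1 tau2 : R)
    (x p : nat -> 'rV[R]_n) (t : nat -> R) : Prop :=
  domF G H (x 0%N) /\
  forall k : nat,
    (forall i : nat, (i < k)%N -> theta gradG H alpha (x i) (p i) != 0%E) ->
    is_prox gradG H alpha (x k) (p k) /\
    (theta gradG H alpha (x k) (p k) != 0%E ->
      exists jstar : 'I_m,
        (forall j, dotv (gradG j (x k)) (p k - x k)
                   <= dotv (gradG jstar (x k)) (p k - x k)) /\
        linesearch G gradG H gamma tau1 tau2 (x k) (p k - x k) jstar (t k) /\
        x k.+1 = x k + t k *: (p k - x k)).

(* Main.v *)
Require Import Defs.
From HB Require Import structures.
From mathcomp Require Import all_boot all_order all_algebra.
From mathcomp Require Import all_classical all_reals all_analysis.
From mathcomp Require Import ring lra.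
Import Order.TTheory GRing.Theory Num.Theory.
Import numFieldNormedType.Exports.
Local Open Scope classical_set_scope.
Local Open Scope ring_scope.

Set Implicit Arguments. Unset Strict Implicit.

Lemma dotvDl (R : realType) n (u v w : 'rV[R]_n) : dotv (u + v) w = dotv u w + dotv v w.
Proof. by rewrite /dotv -big_split /=; apply: eq_bigr => i _; rewrite !mxE mulrDl. Qed.
Lemma dotvC (R : realType) n (u v : 'rV[R]_n) : dotv u v = dotv v u.
Proof. by rewrite /dotv; apply: eq_bigr => i _; rewrite mulrC. Qed.
Lemma dotvDr (R : realType) n (u v w : 'rV[R]_n) : dotv w (u + v) = dotv w u + dotv w v.
Proof. by rewrite dotvC dotvDl (dotvC u w) (dotvC v w). Qed.
Lemma dotvZl (R : realType) n a (u w : 'rV[R]_n) : dotv (a *: u) w = a * dotv u w.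
Proof. by rewrite /dotv mulr_sumr; apply: eq_bigr => i _; rewrite !mxE mulrA. Qed.
Lemma dotvZr (R : realType) n a (u w : 'rV[R]_n) : dotv w (a *: u) = a * dotv w u.
Proof. by rewrite dotvC dotvZl dotvC. Qed.
Lemma dotvNl (R : realType) n (u w : 'rV[R]_n) : dotv (- u) w = - dotv u w.
Proof. by rewrite -scaleN1r dotvZl mulN1r. Qed.
Lemma dotvNr (R : realType) n (u w : 'rV[R]_n) : dotv w (- u) = - dotv w u.
Proof. by rewrite dotvC dotvNl dotvC. Qed.
Lemma dotvBl (R : realType) n (u v w : 'rV[R]_n) : dotv (u - v) w = dotv u w - dotv v w.
Proof. by rewrite dotvDl dotvNl. Qed.
Lemma dotvBr (R : realType) n (u v w : 'rV[R]_n) : dotv w (u - v) = dotv w u - dotv w v.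
Proof. by rewrite dotvDr dotvNr. Qed.
Lemma dotv0r (R : realType) n (u : 'rV[R]_n) : dotv u 0 = 0.
Proof. by rewrite /dotv big1 // => i _; rewrite mxE mulr0. Qed.
Lemma sqnorm_ge0 (R : realType) n (u : 'rV[R]_n) : 0 <= sqnorm u.
Proof. by rewrite /sqnorm /dotv sumr_ge0 // => i _; rewrite -expr2 sqr_ge0. Qed.
Lemma sqnormD (R : realType) n (u v : 'rV[R]_n) :
  sqnorm (u + v) = sqnorm u + 2 * dotv u v + sqnorm v.
Proof. rewrite /sqnorm !dotvDl !dotvDr (dotvC v u); ring. Qed.
Lemma sqnormZ (R : realType) n a (u : 'rV[R]_n) : sqnorm (a *: u) = a ^+ 2 * sqnorm u.
Proof. rewrite /sqnorm dotvZl dotvZr; ring. Qed.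
Lemma sqnormN (R : realType) n (u : 'rV[R]_n) : sqnorm (- u) = sqnorm u.
Proof. by rewrite /sqnorm dotvNl dotvNr opprK. Qed.

Lemma bt_pos (R : realType) (tau1 tau2 : R) P a s :
  0 < tau1 -> tau2 < 1 -> bt_until tau1 tau2 P a s -> 0 < a <= 1 -> 0 < s <= 1.
Proof.
move=> t1 t2; elim=> // t t' s' _ /andP[r1 r2] _ IH /andP[a0 a1]; apply: IH.
apply/andP; split; first by apply: lt_le_trans r1; rewrite mulr_gt0.
apply: le_trans r2 _; nra.
Qed.

Lemma bigmaxe_attain (R : realType) m (f : 'I_m -> \bar R) (i0 : 'I_m) :
  exists i, (\big[maxe/-oo]_(j < m) f j = f i)%E.
Proof.
exists [arg max_(i > i0 | true) f i]%O.
by rewrite (bigmax_eq_arg _ i0) //= => i _; rewrite leNye.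
Qed.
Lemma bigmaxe_ge (R : realType) m (f : 'I_m -> \bar R) i :
  (f i <= \big[maxe/-oo]_(j < m) f j)%E.
Proof. exact: le_bigmax. Qed.

Definition finH (R : realType) n m (H : 'I_m -> 'rV[R]_n -> \bar R) z :=
  forall i, H i z \is a fin_num.

Lemma domF_finH (R : realType) n m (G : 'I_m -> 'rV[R]_n -> R) H z :
  (forall i z, H i z != -oo%E) -> domF G H z -> finH H z.
Proof.
move=> Hn Hd i; move: (Hd i) (Hn i z); rewrite /Fobj.
by case: (H i z).
Qed.

Lemma finH_domF (R : realType) n m (G : 'I_m -> 'rV[R]_n -> R) H z :
  finH H z -> domF G H z.
Proof.
move=> Hf i; rewrite /Fobj -(fineK (Hf i)) -EFinD; exact: ltry.
Qed.

Lemma psi_fin (R : realType) n m (gradG : 'I_m -> 'rV[R]_n -> 'rV[R]_n) H x u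
   (i0 : 'I_m) : finH H x -> finH H u ->
  psi gradG H x u = (fine (psi gradG H x u))%:E /\
  (forall i, dotv (gradG i x) (u - x) + fine (H i u) - fine (H i x)
               <= fine (psi gradG H x u)) /\
  exists i, fine (psi gradG H x u) =
            dotv (gradG i x) (u - x) + fine (H i u) - fine (H i x).
Proof.
move=> Hx Hu.
have E : psi gradG H x u = (\big[maxe/-oo]_(i < m)
   (dotv (gradG i x) (u - x) + fine (H i u) - fine (H i x))%:E)%E.
  rewrite /psi; apply: eq_bigr => i _.
  rewrite -(fineK (Hx i)) -(fineK (Hu i)) /=.
  by rewrite -!EFinD.
have [i1 Ei1] := bigmaxe_attain (fun i =>
   (dotv (gradG i x) (u - x) + fine (H i u) - fine (H i x))%:E) i0.
rewrite E Ei1 /=; split=> //; split; last by exists i1.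
move=> i; rewrite -lee_fin -Ei1.
exact: (bigmaxe_ge (fun i =>
   (dotv (gradG i x) (u - x) + fine (H i u) - fine (H i x))%:E)).
Qed.

Lemma conv_H (R : realType) n (f : 'rV[R]_n -> \bar R) a b l :
  (forall z, f z != -oo%E) -> convex_efun f ->
  f a \is a fin_num -> f b \is a fin_num -> 0 < l <= 1 ->
  f (a + l *: (b - a)) \is a fin_num /\
  fine (f (a + l *: (b - a))) <= fine (f a) + l * (fine (f b) - fine (f a)).
Proof.
move=> fn fc fa fb /andP[l0 l1].
have [->|lt1] := eqVneq l 1.
  rewrite scale1r addrC subrK; split=> //; lra.
have l1' : l < 1 by rewrite lt_neqAle lt1 l1.
have := fc a b l; rewrite l0 l1' => /(_ isT).
have -> : (1 - l) *: a + l *: b = a + l *: (b - a).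
  by rewrite scalerBl scale1r scalerBr addrA addrAC.
rewrite -(fineK fa) -(fineK fb) -!EFinM -EFinD => hle.
have hf : f (a + l *: (b - a)) \is a fin_num.
  move: hle (fn (a + l *: (b - a))).
  by case: (f (a + l *: (b - a))).
split=> //; move: hle; rewrite -(fineK hf) lee_fin => hle.
rewrite fineK //; lra.
Qed.

Lemma conv_G (R : realType) n (f : 'rV[R]_n -> R) a b l :
  convex_fun f -> 0 < l <= 1 ->
  f (a + l *: (b - a)) <= f a + l * (f b - f a).
Proof.
move=> fc /andP[l0 l1].
have [->|lt1] := eqVneq l 1.
  rewrite scale1r addrC subrK; lra.
have l1' : l < 1 by rewrite lt_neqAle lt1 l1.
have := fc a b l; rewrite l0 l1' => /(_ isT).
have -> : (1 - l) *: a + l *: b = a + l *: (b - a).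
  by rewrite scalerBl scale1r scalerBr addrA addrAC.
lra.
Qed.

Lemma core_le (R : realType) (a b c : R) : 0 <= c ->
  (forall s, 0 < s < 1 -> a <= b + s * c) -> a <= b.
Proof.
move=> c0 h; apply/ler_addgt0Pr => e e0.
pose s := e / (e + c + 1).
have d0 : 0 < e + c + 1 by lra.
have s0 : 0 < s by rewrite divr_gt0.
have s1 : s < 1 by rewrite ltr_pdivrMr // mul1r; lra.
apply: le_trans (h s _) _; first by rewrite s0 s1.
rewrite lerD2l /s mulrAC ler_pdivrMr //; nra.
Qed.

Lemma grad_ineq (R : realType) n (f : 'rV[R]_n -> R) g x y :
  is_gradient f g -> convex_fun f -> f x + dotv (g x) (y - x) <= f y.
Proof.
move=> hg fc; have [hd hdv] := hg x.
have hder := diff_derivable (v := y - x) hd.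
have L : 'D_(y - x) f x = dotv (g x) (y - x) by rewrite deriveE // hdv.
have cr := cvg_dnbhs_at_right hder.
have : lim ((fun h : R => h^-1 *: ((f \o shift x) (h *: (y - x)) - f x)) @ 0^'+)
        <= f y - f x.
  apply: limr_le; first exact: cvgP cr.
  near=> h.
  have h0 : 0 < h by near: h; exact: nbhs_right_gt.
  have h1 : h < 1 by near: h; exact: nbhs_right_lt.
  rewrite /= (addrC (h *: (y - x)) x).
  have := conv_G x y fc (l := h); rewrite h0 (ltW h1) => /(_ isT) hc.
  rewrite -[_ *: _]/(h^-1 * _) ler_pdivrMl //; lra.
rewrite (cvg_lim _ cr).
rewrite -[lim _]/('D_(y - x) f x) L; lra.
Unshelve. all: by end_near.
Qed.

Lemma prox_min (R : realType) n m (gradG : 'I_m -> 'rV[R]_n -> 'rV[R]_n) H alpha x p z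
  (i0 : 'I_m) : finH H x -> finH H p -> finH H z -> is_prox gradG H alpha x p ->
  fine (psi gradG H x p) + sqnorm (p - x) / (2 * alpha)
  <= fine (psi gradG H x z) + sqnorm (z - x) / (2 * alpha).
Proof.
move=> Hx Hp Hz hp; have := hp z.
rewrite /prox_obj (proj1 (psi_fin gradG i0 Hx Hp)) (proj1 (psi_fin gradG i0 Hx Hz)).
by rewrite -!EFinD lee_fin.
Qed.

Lemma prox_ineq (R : realType) n m (gradG : 'I_m -> 'rV[R]_n -> 'rV[R]_n) H alpha x p u
  (i0 : 'I_m) :
  (forall i z, H i z != -oo%E) -> (forall i, convex_efun (H i)) -> 0 < alpha ->
  finH H x -> finH H p -> finH H u -> is_prox gradG H alpha x p ->
  fine (psi gradG H x p) - fine (psi gradG H x u) <= dotv (p - x) (u - p) / alpha.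
Proof.
move=> Hn Hc a0 Hx Hp Hu hp.
set Pp := fine (psi gradG H x p); set Pu := fine (psi gradG H x u).
have sq0 := sqnorm_ge0 (u - p).
apply: (@core_le _ _ _ (sqnorm (u - p) / (2 * alpha))).
  by rewrite divr_ge0 // mulr_ge0 // ltW.
move=> s /andP[s0 s1].
have s01 : 0 < s <= 1 by rewrite s0 (ltW s1).
set us := p + s *: (u - p).
have Hus : finH H us.
  by move=> i; have [] := conv_H (Hn i) (Hc i) (Hp i) (Hu i) (l := s) s01.
have hmin := prox_min i0 Hx Hp Hus hp.
have [_ [hu _]] := psi_fin gradG i0 Hx Hu.
have [_ [hpp _]] := psi_fin gradG i0 Hx Hp.
have [_ [_ [i1 Ei1]]] := psi_fin gradG i0 Hx Hus.
rewrite Ei1 in hmin.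
have [_ hH] := conv_H (Hn i1) (Hc i1) (Hp i1) (Hu i1) (l := s) s01.
have hu1 := hu i1; have hp1 := hpp i1.
have E1 : us - x = (p - x) + s *: (u - p) by rewrite /us addrAC.
move: hmin; rewrite E1 (sqnormD (p - x) (s *: (u - p))) sqnormZ dotvZr => hmin.
have E2 : dotv (gradG i1 x) ((p - x) + s *: (u - p)) = dotv (gradG i1 x) (p - x) + s * dotv (gradG i1 x) (u - p).
  by rewrite dotvDr dotvZr.
have E3 : dotv (gradG i1 x) (u - x) = dotv (gradG i1 x) (p - x) + dotv (gradG i1 x) (u - p).
  by rewrite -dotvDr (addrC (p - x)) addrA subrK.
rewrite E2 in hmin; rewrite E3 in hu1.
move: hmin hu1 hp1 hH.
rewrite -/us.
set A := dotv (gradG i1 x) (p - x); set B := dotv (gradG i1 x) (u - p).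
set hp' := fine (H i1 p); set hu' := fine (H i1 u); set hx' := fine (H i1 x); set hs := fine (H i1 us).
set D := dotv (p - x) (u - p); set Q := sqnorm (u - p); set Sd := sqnorm (p - x).
move=> hmin hu1 hp1 hH.
set k := (2 * alpha)^-1.
have k0 : 0 < k by rewrite invr_gt0 mulr_gt0.
have ak : alpha^-1 = 2 * k by rewrite /k invfM mulrA divff ?mul1r // pnatr_eq0.

rewrite -/Pp -/Pu in hmin hu1 hp1; rewrite -/k in hmin.
rewrite ak.
have h1 := ler_wpM2l (ltW s0) hu1.
have s1' : 0 <= 1 - s by lra.
have h2 := ler_wpM2l s1' hp1.
have : s * (Pp - Pu) <= s * (D * (2 * k) + s * (Q * k)).
  rewrite -subr_ge0; move: hmin hH h1 h2; rewrite -subr_ge0.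
  move=> hmin hH h1 h2. nra.
by rewrite ler_pM2l.
Qed.

Lemma prox_finH (R : realType) n m (gradG : 'I_m -> 'rV[R]_n -> 'rV[R]_n) H alpha x p :
  (forall i z, H i z != -oo%E) -> finH H x -> is_prox gradG H alpha x p -> finH H p.
Proof.
move=> Hn Hx hp i; apply: contraT => nf.
have Hi : H i p = +oo%E by move: nf (Hn i p); case: (H i p).
have Hpsi : psi gradG H x p = +oo%E.
  apply/eqP; rewrite eq_le leey /=.
  apply: le_trans (bigmaxe_ge _ i); rewrite Hi -(fineK (Hx i)) /=.
  done.
have := hp x; rewrite /prox_obj Hpsi (proj1 (psi_fin gradG i Hx Hx)) -EFinD.
done.
Qed.

Lemma psi_self (R : realType) n m (gradG : 'I_m -> 'rV[R]_n -> 'rV[R]_n) H x (i0 : 'I_m) :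
  finH H x -> fine (psi gradG H x x) = 0.
Proof.
move=> Hx; have [_ [_ [i ->]]] := psi_fin gradG i0 Hx Hx.
by rewrite subrr dotv0r add0r subrr.
Qed.

Lemma FobjE (R : realType) n m (G : 'I_m -> 'rV[R]_n -> R) H i z :
  finH H z -> Fobj G H i z = (G i z + fine (H i z))%:E.
Proof. by move=> Hz; rewrite /Fobj -(fineK (Hz i)) /= EFinD. Qed.
Unset Implicit Arguments. Set Strict Implicit.

Theorem mainTheorem2 (R : realType) (n m : nat)
    (G : 'I_m -> 'rV[R]_n -> R) (gradG : 'I_m -> 'rV[R]_n -> 'rV[R]_n)
    (H : 'I_m -> 'rV[R]_n -> \bar R)
    (alpha gamma tau1 tau2 : R)
    (x p : nat -> 'rV[R]_n) (t : nat -> R) (k : nat) (j : 'I_m) :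
  standing_assumptions G gradG H ->
  0 < alpha -> 0 < gamma < 2 / alpha -> 0 < tau1 -> tau1 < tau2 -> tau2 < 1 ->
  MPG_run G gradG H alpha gamma tau1 tau2 x p t ->
  (forall i : nat, (i <= k)%N -> theta gradG H alpha (x i) (p i) != 0%E) ->
  G j (x k.+1) <= G j (x k) + t k * dotv (gradG j (x k)) (p k - x k)
                  + t k * (gamma / 2) * sqnorm (p k - x k) ->
  (* (i) *)
  ((t k)^-1%:E * (Fobj G H j (x k.+1) - Fobj G H j (x k))
     - (gamma / 2 * sqnorm (p k - x k))%:E
   <= psi gradG H (x k) (p k))%E /\
  (* (ii) *)
  (forall y : 'rV[R]_n, domF G H y ->
    ((sqnorm (x k.+1 - y))%:E
     <= (sqnorm (x k - y))%:E
        + (2 * alpha)%:E * (Fobj G H j (x k) - Fobj G H j (x k.+1))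
        + (2 * alpha * t k)%:E
            * \big[maxe/-oo]_(i < m) (Fobj G H i y - Fobj G H i (x k))
        - (2 * alpha * t k * (alpha^-1 - gamma / 2) * sqnorm (p k - x k))%:E
        + (t k ^+ 2 * sqnorm (p k - x k))%:E)%E) /\
  (* (iii) *)
  (Fobj G H j (x k.+1) - Fobj G H j (x k)
   <= (- (t k * (alpha^-1 - gamma / 2) * sqnorm (p k - x k)))%:E)%E.
Proof.
move=> [hG [hH _]] a0 /andP[g0 g1] t10 t12 t21 [x0d run] hth harm.
have Hn : forall i z, H i z != -oo%E by move=> i z; exact: ((hH i).1.1 z).
have Hc : forall i, convex_efun (H i) by move=> i; exact: (hH i).2.1.
have step : forall i, (i <= k)%N -> is_prox gradG H alpha (x i) (p i) /\
    0 < t i <= 1 /\ x i.+1 = x i + t i *: (p i - x i).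
  move=> i ik.
  have [hp hex] := run i (fun i' hi' => hth i' (ltnW (leq_trans hi' ik))).
  have [js [_ [[t2 [hb hc]] ex]]] := hex (hth i ik).
  split=> //; split=> //.
  have h01 : 0 < (1:R) <= 1 by rewrite ltr01 lexx.
  have ht2 := bt_pos t10 t21 hb h01.
  case: hc => [[_ ->]|[_ [t3 [/andP[r1 r2] hb3]]]] //.
  apply: (bt_pos t10 t21 hb3).
  case/andP: ht2 => a b.
  apply/andP; split; first by apply: lt_le_trans r1; rewrite mulr_gt0.
  apply: le_trans r2 _; nra.
have dom : forall i, (i <= k.+1)%N -> finH H (x i).
  elim=> [_|i IH ik]; first exact: domF_finH Hn x0d.
  have ik' : (i <= k)%N by [].
  have [hp [ht ->]] := step i ik'.
  have Hxi := IH (ltnW ik).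
  have Hpi := prox_finH Hn Hxi hp.
  by move=> l; have [] := conv_H (Hn l) (Hc l) (Hxi l) (Hpi l) ht.
have Hxk := dom k (leqnSn k).
have Hx1 := dom k.+1 (leqnn _).
have [hpk [htk hx1]] := step k (leqnn k).
have Hpk := prox_finH Hn Hxk hpk.
have [Epp [hppj _]] := psi_fin gradG j Hxk Hpk.
set Pp := fine (psi gradG H (x k) (p k)) in Epp hppj *.
have [tk0 tk1] := andP htk.
have [_ hHj] := conv_H (Hn j) (Hc j) (Hxk j) (Hpk j) htk.
rewrite -hx1 in hHj.
have hpj := ler_wpM2l (ltW tk0) (hppj j).
have hD : (G j (x k.+1) + fine (H j (x k.+1))) - (G j (x k) + fine (H j (x k)))
   <= t k * (Pp + gamma / 2 * sqnorm (p k - x k)).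
  move: harm hHj hpj.
  set A := dotv _ _; set S := sqnorm _.
  move=> harm hHj hpj; lra.
have hPp : Pp <= - (sqnorm (p k - x k) / alpha).
  have := prox_ineq j Hn Hc a0 Hxk Hpk Hxk hpk.
  rewrite (psi_self gradG j Hxk) -(opprB (p k) (x k)) dotvNr -/Pp /sqnorm; lra.
rewrite Epp (FobjE G j Hx1) (FobjE G j Hxk).
split; last split.
- rewrite -EFinB lee_fin.
  have : (t k)^-1 * ((G j (x k.+1) + fine (H j (x k.+1))) - (G j (x k) + fine (H j (x k))))
         <= Pp + gamma / 2 * sqnorm (p k - x k) by rewrite ler_pdivrMl.
  lra.
- move=> y hy.
  have Hy := domF_finH Hn hy.
  have EM : (\big[maxe/-oo]_(i < m) (Fobj G H i y - Fobj G H i (x k)) =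
     \big[maxe/-oo]_(i < m) ((G i y + fine (H i y)) - (G i (x k) + fine (H i (x k))))%:E)%E.
    by apply: eq_bigr => i _; rewrite (FobjE G i Hy) (FobjE G i Hxk).
  have [i1 Ei1] := bigmaxe_attain (fun i =>
     ((G i y + fine (H i y)) - (G i (x k) + fine (H i (x k))))%:E) j.
  rewrite EM Ei1.
  set Mr := (G i1 y + fine (H i1 y)) - (G i1 (x k) + fine (H i1 (x k))).
  have hM : forall i, (G i y + fine (H i y)) - (G i (x k) + fine (H i (x k))) <= Mr.
    move=> i; rewrite -lee_fin /Mr -Ei1.
    exact: (bigmaxe_ge (fun i =>
     ((G i y + fine (H i y)) - (G i (x k) + fine (H i (x k))))%:E)).
  have [_ [_ [i2 Ey]]] := psi_fin gradG j Hxk Hy.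
  have hPy : fine (psi gradG H (x k) y) <= Mr.
    rewrite Ey; have := hM i2.
    have := grad_ineq (x k) y (hG i2).1 (hG i2).2.2.
    lra.
  have hprox := prox_ineq j Hn Hc a0 Hxk Hpk Hy hpk.
  have E1 : y - p k = (y - x k) - (p k - x k) by rewrite opprB addrA subrK.
  rewrite E1 dotvBr -/(sqnorm (p k - x k)) -/Pp in hprox.
  have E2 : x k.+1 - y = (x k - y) + t k *: (p k - x k) by rewrite hx1 addrAC.
  rewrite E2 sqnormD sqnormZ dotvZr.
  have E3 : dotv (x k - y) (p k - x k) = - dotv (p k - x k) (y - x k).
    by rewrite dotvC -dotvNr opprB.
  rewrite E3.
  rewrite -!EFinB -EFinD lee_fin.
  move: hprox hPy hD; set S := sqnorm (p k - x k); set E := dotv _ (y - x k).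
  set Py := fine (psi gradG H (x k) y).
  move=> hprox hPy hD.
  have e : 2 * alpha * t k * (alpha^-1 - gamma / 2) * S = 2 * t k * S - alpha * t k * gamma * S.
    by field; rewrite gt_eqF.
  rewrite e.
  have h1 : (Pp - Py) * alpha <= E - S by rewrite -ler_pdivlMr.
  have h2 := ler_wpM2l (ltW tk0) h1.
  have h3 := ler_wpM2l (mulr_ge0 (ltW a0) (ltW tk0)) hPy.
  have h4 := ler_wpM2l (ltW a0) hD.
  lra.
- rewrite -EFinB lee_fin.
  have := ler_wpM2l (ltW tk0) hPp.
  move: hD; set S := sqnorm _.
  move=> hD h; lra.
Qed.
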